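(* Suppose $M\in\mathbb{R}_+^{p\times q}$ is such that both $M$ and $M^T$ are slack matrices of polytopes. Then there exists a polytope $P$ with $0$ in the interior of $P$ such that $M$ is a slack matrix of $P$ and $M^T$ is a slack matrix of the polar $P^\circ=\{y: x^Ty\le 1 \text{ for all } x\in P\}$.
   Context: For a polytope $P\subseteq\mathbb{R}^n$ with $\dim(P)\ge 1$, a slack matrix of $P$ is any matrix $S=[\mathbb{1},V]\cdot[w,-W]^T\in\mathbb{R}^{p\times q}$ (so $S_{ij}=w_j-W_jv_i$, with $v_i$ the $i$th row of $V$ and $W_j$ the $j$th row of $W$), where $V\in\mathbb{R}^{p\times n}$ satisfies $P=\operatorname{conv}(\text{rows of }V)$ and $W\in\mathbb{R}^{q\times n}$, $w\in\mathbb{R}^q$ satisfy $P=\{x\in\mathbb{R}^n: Wx\le w\}$. A matrix is a slack matrix of a polytope if it is a slack matrix of some polytope of dimension at least one. *)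

(* Defs.v *)
From HB Require Import structures.
From mathcomp Require Import all_boot all_order all_algebra.
From mathcomp Require Import reals.
Set Implicit Arguments. Unset Strict Implicit. Unset Printing Implicit Defensive.
Import Order.TTheory GRing.Theory Num.Theory.
Local Open Scope ring_scope.

Definition dotv (R : realType) (n : nat) (x y : 'rV[R]_n) : R :=
  \sum_(k < n) x 0 k * y 0 k.

Definition in_conv_rows (R : realType) (p n : nat) (V : 'M[R]_(p, n))
    (x : 'rV[R]_n) : Prop :=
  exists lam : 'I_p -> R,
    (forall i, 0 <= lam i) /\ \sum_(i < p) lam i = 1 /\
    x = \sum_(i < p) lam i *: row i V.

Definition is_conv_rows (R : realType) (p n : nat) (P : 'rV[R]_n -> Prop)
    (V : 'M[R]_(p, n)) : Prop :=
  forall x, P x <-> in_conv_rows V x.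

Definition is_ineq_desc (R : realType) (q n : nat) (P : 'rV[R]_n -> Prop)
    (W : 'M[R]_(q, n)) (w : 'I_q -> R) : Prop :=
  forall x, P x <-> (forall j : 'I_q, dotv (row j W) x <= w j).

Definition is_polytope (R : realType) (n : nat) (P : 'rV[R]_n -> Prop) : Prop :=
  exists (p : nat) (V : 'M[R]_(p, n)), is_conv_rows P V.

(* dim(P) >= 1, i.e. the affine hull of P is not a single point (nor empty):
   P contains two distinct points. *)
Definition dim_ge1 (R : realType) (n : nat) (P : 'rV[R]_n -> Prop) : Prop :=
  exists x y, P x /\ P y /\ x <> y.

(* S is a slack matrix of the polytope P (of dimension >= 1):
   S = [1, V] [w, -W]^T, i.e. S_ij = w_j - W_j v_i, with
   P = conv(rows of V) and P = { x : W x <= w }. *)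
Definition is_slack_matrix_of (R : realType) (n p q : nat)
    (P : 'rV[R]_n -> Prop) (S : 'M[R]_(p, q)) : Prop :=
  is_polytope P /\ dim_ge1 P /\
  exists (V : 'M[R]_(p, n)) (W : 'M[R]_(q, n)) (w : 'I_q -> R),
    is_conv_rows P V /\ is_ineq_desc P W w /\
    forall i j, S i j = w j - dotv (row j W) (row i V).

Definition is_slack_matrix (R : realType) (p q : nat) (S : 'M[R]_(p, q)) : Prop :=
  exists (n : nat) (P : 'rV[R]_n -> Prop), is_slack_matrix_of P S.

Definition polar (R : realType) (n : nat) (P : 'rV[R]_n -> Prop) : 'rV[R]_n -> Prop :=
  fun y => forall x, P x -> dotv x y <= 1.

Definition zero_in_interior (R : realType) (n : nat) (P : 'rV[R]_n -> Prop) : Prop :=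
  exists eps : R, 0 < eps /\
    forall x : 'rV[R]_n, (forall k, `|x 0 k| < eps) -> P x.

(* Main.v *)
Require Import Defs.
From HB Require Import structures.
From mathcomp Require Import all_boot all_order all_algebra.
From mathcomp Require Import reals.
From mathcomp Require Import ring lra.
Import Order.TTheory GRing.Theory Num.Theory.
Local Open Scope ring_scope.

Lemma dotvC {R : realType} {n} (x y : 'rV[R]_n) : dotv x y = dotv y x.
Proof. by rewrite /dotv; apply: eq_bigr => k _; rewrite mulrC. Qed.

Lemma dotvDl {R : realType} {n} (x y z : 'rV[R]_n) : dotv (x + y) z = dotv x z + dotv y z.
Proof. by rewrite /dotv -big_split; apply: eq_bigr => k _; rewrite mxE mulrDl. Qed.

Lemma dotvNl {R : realType} {n} (x z : 'rV[R]_n) : dotv (- x) z = - dotv x z.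
Proof. by rewrite /dotv -sumrN; apply: eq_bigr => k _; rewrite mxE mulNr. Qed.

Lemma dotvBl {R : realType} {n} (x y z : 'rV[R]_n) : dotv (x - y) z = dotv x z - dotv y z.
Proof. by rewrite dotvDl dotvNl. Qed.

Lemma dotvZl {R : realType} {n} a (x z : 'rV[R]_n) : dotv (a *: x) z = a * dotv x z.
Proof. by rewrite /dotv mulr_sumr; apply: eq_bigr => k _; rewrite mxE mulrA. Qed.

Lemma dotv0l {R : realType} {n} (z : 'rV[R]_n) : dotv 0 z = 0.
Proof. by rewrite /dotv big1 // => k _; rewrite mxE mul0r. Qed.

Lemma dotv_suml {R : realType} {n} (I : finType) (F : I -> 'rV[R]_n) z :
  dotv (\sum_i F i) z = \sum_i dotv (F i) z.
Proof.
apply: (big_ind2 (fun a b => dotv a z = b)) => //; first exact: dotv0l.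
by move=> a b c d <- <-; rewrite dotvDl.
Qed.

Lemma dotvDr {R : realType} {n} (x y z : 'rV[R]_n) : dotv z (x + y) = dotv z x + dotv z y.
Proof. by rewrite dotvC dotvDl !(dotvC z). Qed.
Lemma dotvBr {R : realType} {n} (x y z : 'rV[R]_n) : dotv z (x - y) = dotv z x - dotv z y.
Proof. by rewrite dotvC dotvBl !(dotvC z). Qed.
Lemma dotvZr {R : realType} {n} a (x z : 'rV[R]_n) : dotv z (a *: x) = a * dotv z x.
Proof. by rewrite dotvC dotvZl dotvC. Qed.
Lemma dotv_sumr {R : realType} {n} (I : finType) (F : I -> 'rV[R]_n) z :
  dotv z (\sum_i F i) = \sum_i dotv z (F i).
Proof. by rewrite dotvC dotv_suml; apply: eq_bigr => i _; rewrite dotvC. Qed.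

Lemma dotv_mul {R : realType} {n} m (x : 'rV[R]_n) (A : 'M[R]_(n, m)) (y : 'rV[R]_m) :
  dotv (x *m A) y = dotv x (y *m A^T).
Proof.
rewrite /dotv.
transitivity (\sum_(k < m) \sum_(l < n) x 0 l * A l k * y 0 k).
  by apply: eq_bigr => k _; rewrite mxE big_distrl.
rewrite exchange_big /=; apply: eq_bigr => l _; rewrite mxE big_distrr /=.
by apply: eq_bigr => k _; rewrite !mxE -mulrA (mulrC (A l k)).
Qed.

Lemma conv_coord {R : realType} {p n} (V : 'M[R]_(p, n)) lam k :
  (\sum_(i < p) lam i *: row i V) 0 k = \sum_i lam i * V i k.
Proof. by rewrite summxE; apply: eq_bigr => i _; rewrite !mxE. Qed.

Lemma conv_bound {R : realType} {p n} (V : 'M[R]_(p, n)) x k :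
  in_conv_rows V x -> `|x 0 k| <= \sum_i `|V i k|.
Proof.
move=> [lam [l0 [l1 ->]]]; rewrite conv_coord.
apply: le_trans (ler_norm_sum _ _ _) _; apply: ler_sum => i _.
rewrite normrM ger0_norm //; apply: ler_piMl => //.
rewrite -l1 (bigD1 i) //= lerDl; exact: sumr_ge0.
Qed.

Lemma ray_zero {R : realType} {p q n} {P : 'rV[R]_n -> Prop} {V : 'M[R]_(p, n)}
  {W : 'M[R]_(q, n)} {w a e} :
  is_conv_rows P V -> is_ineq_desc P W w -> P a ->
  (forall j, dotv (row j W) e <= 0) -> e = 0.
Proof.
move=> hc hi Pa he; apply/rowP => k; rewrite mxE.
apply/eqP; apply/negPn/negP => ek.
set K := \sum_i `|V i k|.
have ek0 : 0 < `|e 0 k| by rewrite normr_gt0.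
set t := (K + `|a 0 k| + 1) / `|e 0 k|.
have t0 : 0 <= t.
  apply: divr_ge0; last exact: ltW.
  by rewrite addr_ge0 // ?addr_ge0 // sumr_ge0.
have Px : P (a + t *: e).
  apply/hi => j; rewrite dotvDr dotvZr.
  have := (hi a).1 Pa j; have := he j => h1 h2.
  rewrite -[w j]addr0; apply: lerD => //.
  by rewrite mulr_ge0_le0.
have := @conv_bound _ _ _ V _ k ((hc _).1 Px).
rewrite !mxE -/K => hb.
have : `|t * e 0 k| = K + `|a 0 k| + 1.
  by rewrite normrM (ger0_norm t0) /t divfK // gt_eqF.
move=> ht.
have : `|t * e 0 k| <= `|a 0 k + t * e 0 k| + `|a 0 k|.
  rewrite -[`|a 0 k|]normrN; apply: le_trans (ler_normD _ _).
  by rewrite addrC addKr.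
rewrite ht => h. have := le_trans h (lerD hb (lexx `|a 0 k|)).
by rewrite -[X in _ <= X]addr0 lerD2l ler10.
Qed.

Lemma span_slack {R : realType} {p q n} (P : 'rV[R]_n -> Prop) (V : 'M[R]_(p, n))
  (W : 'M[R]_(q, n)) w (S : 'M[R]_(p, q)) :
  dim_ge1 P -> is_conv_rows P V -> is_ineq_desc P W w ->
  (forall i j, S i j = w j - dotv (row j W) (row i V)) ->
  forall (h0 : R) (h : 'rV[R]_n), exists mu : 'I_q -> R,
    forall i, h0 + dotv h (row i V) = \sum_j S i j * mu j.
Proof.
move=> [x1 [x2 [Px1 [Px2 x12]]]] hc hi hS h0 h.
pose Yt : 'M[R]_(1 + n, q) := col_mx (\row_j w j) (- W^T).
have key : forall (c0 : R) (c : 'rV[R]_n),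
    (forall j, c0 * w j - dotv (row j W) c = 0) -> c0 = 0 /\ c = 0.
  move=> c0 c hj.
  have [c00|c0n] := eqVneq c0 0.
    split => //; apply: (ray_zero hc hi Px1) => j.
    by have := hj j; rewrite c00 mul0r sub0r => /eqP; rewrite oppr_eq0 => /eqP ->.
  exfalso; pose x := c0^-1 *: c.
  have hx : forall j, dotv (row j W) x = w j.
    move=> j; rewrite /x dotvZr; have := hj j; move/eqP; rewrite subr_eq0 => /eqP <-.
    by rewrite mulrA mulVf // mul1r.
  have ex : forall b, P b -> b = x.
    move=> b Pb; apply/eqP; rewrite -subr_eq0; apply/eqP.
    apply: (ray_zero hc hi Pb) => j; rewrite dotvBr hx subr_le0.
    exact: (hi b).1 Pb j.
  by apply: x12; rewrite (ex _ Px1) (ex _ Px2).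
have freeY : row_free Yt.
  apply: inj_row_free => v hv.
  have := key (lsubmx v 0 0) (rsubmx v).
  case.
    move=> j; have := congr1 (fun A : 'M[R]_(1,q) => A 0 j) hv.
    rewrite -{1}(hsubmxK v) mul_row_col !mxE big_ord1 !mxE.
    move=> <-; congr (_ + _); rewrite /dotv -sumrN; apply: eq_bigr => k _.
    by rewrite !mxE mulrN mulrC.
  move=> hl hr; rewrite -(hsubmxK v) hr.
  have -> : lsubmx v = 0 by apply/matrixP => a b; rewrite !ord1 hl mxE.
  by rewrite row_mx0.
have [Lr YL] := row_freeP freeY.
pose X : 'M[R]_(p, 1 + n) := row_mx (const_mx 1) V.
have SX : S = X *m Yt.
  apply/matrixP => i j; rewrite hS mul_row_col !mxE big_ord1 !mxE mul1r.
  congr (_ + _); rewrite /dotv -sumrN; apply: eq_bigr => k _.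
  by rewrite !mxE mulrN mulrC.
pose hcol : 'M[R]_(1 + n, 1) := col_mx (h0%:M) h^T.
exists (fun j => (Lr *m hcol) j 0) => i.
have -> : \sum_j S i j * (Lr *m hcol) j 0 = (S *m (Lr *m hcol)) i 0 by rewrite mxE.
rewrite SX mulmxA -(mulmxA X) YL mulmx1 mul_row_col !mxE big_ord1 !mxE mul1r eqxx mulr1n.
congr (_ + _); rewrite /dotv; apply: eq_bigr => k _.
by rewrite !mxE mulrC.
Qed.

Lemma conv_row {R : realType} {p n} (V : 'M[R]_(p, n)) i : in_conv_rows V (row i V).
Proof.
exists (fun l => (l == i)%:R); split; first by move=> l; rewrite ler0n.
split.
  by rewrite (bigD1 i) //= eqxx big1 ?addr0 // => l /negPf ->.
rewrite (bigD1 i) //= eqxx scale1r big1 ?addr0 // => l /negPf ->.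
by rewrite scale0r.
Qed.

Lemma dotv_conv {R : realType} {p n} (V : 'M[R]_(p, n)) (lam : 'I_p -> R) y :
  dotv (\sum_i lam i *: row i V) y = \sum_i lam i * dotv (row i V) y.
Proof. by rewrite dotv_suml; apply: eq_bigr => i _; rewrite dotvZl. Qed.

Lemma conv_dot_le {R : realType} {p n} (V : 'M[R]_(p, n)) x y b :
  in_conv_rows V x -> (forall i, dotv (row i V) y <= b) -> dotv x y <= b.
Proof.
move=> [lam [l0 [l1 ->]]] h; rewrite dotv_conv.
have -> : b = \sum_i lam i * b by rewrite -big_distrl /= l1 mul1r.
by apply: ler_sum => i _; apply: ler_wpM2l.
Qed.

Lemma conv_dot_eq {R : realType} {p n} (V : 'M[R]_(p, n)) x y b :
  in_conv_rows V x -> (forall i, dotv (row i V) y = b) -> dotv x y = b.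
Proof.
move=> [lam [l0 [l1 ->]]] h; rewrite dotv_conv.
have -> : b = \sum_i lam i * b by rewrite -big_distrl /= l1 mul1r.
by apply: eq_bigr => i _; rewrite h.
Qed.

Lemma dotv_e {R : realType} {n} (k : 'I_n) (d : R) z :
  dotv (\row_l (if l == k then d else 0)) z = d * z 0 k.
Proof.
rewrite /dotv (bigD1 k) //= !mxE eqxx big1 ?addr0 // => l /negPf hl.
by rewrite !mxE hl mul0r.
Qed.

Lemma coords {R : realType} {p q n1} (P1 : 'rV[R]_n1 -> Prop) (V1 : 'M[R]_(p, n1))
  (W1 : 'M[R]_(q, n1)) w1 (M : 'M[R]_(p, q)) (x0 : 'rV[R]_n1) (s : R) :
  dim_ge1 P1 -> is_conv_rows P1 V1 -> is_ineq_desc P1 W1 w1 ->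
  (forall i j, M i j = w1 j - dotv (row j W1) (row i V1)) ->
  (forall j, w1 j - dotv (row j W1) x0 = s) ->
  exists n (C : 'M[R]_(p, n)) (Wm : 'M[R]_(q, n)),
    (forall c, in_conv_rows C c <-> forall j, dotv (row j Wm) c <= s) /\
    (forall i j, M i j = s - dotv (row j Wm) (row i C)) /\
    (0 < n)%N /\
    (forall y, exists h0 h, forall i, s - s * dotv (row i C) y = h0 + dotv h (row i V1)).
Proof.
move=> [x1 [x2 [Px1 [Px2 x12]]]] hc hi hS hx0.
pose U : 'M[R]_(p, n1) := \matrix_(i, k) (V1 i k - x0 0 k).
have rowU : forall i, row i U = row i V1 - x0.
  by move=> i; apply/rowP => k; rewrite !mxE.
pose Bm := row_base U.
pose K := pinvmx Bm.
pose C := U *m K.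
have UB : (U <= Bm)%MS by rewrite /Bm eq_row_base.
have CB : C *m Bm = U by rewrite /C mulmxKpV.
have rowC : forall i, row i C *m Bm = row i V1 - x0.
  by move=> i; rewrite -row_mul CB rowU.
have Binj : injective (fun c : 'rV[R]_(\rank U) => c *m Bm) := row_free_inj (row_base_free U).
pose Wm := W1 *m Bm^T.
have dW : forall j c, dotv (row j Wm) c = dotv (row j W1) (c *m Bm).
  by move=> j c; rewrite row_mul dotv_mul trmxK.
exists (\rank U), C, Wm.
have conv1 : forall c, in_conv_rows C c <-> P1 (x0 + c *m Bm).
  move=> c; split.
    move=> [lam [l0 [l1 ->]]]; apply/hc; exists lam; do 2!split => //.
    rewrite mulmx_suml.
    under eq_bigr do rewrite -scalemxAl rowC scalerBr.
    rewrite sumrB -scaler_suml l1 scale1r addrC subrK //.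
  move=> /hc [lam [l0 [l1 hx]]]; exists lam; do 2!split => //.
  apply: Binj; rewrite /= mulmx_suml.
  under eq_bigr do rewrite -scalemxAl rowC scalerBr.
  by rewrite sumrB -scaler_suml l1 scale1r -hx addrC addKr.
split.
  move=> c; rewrite conv1 hi; split => h j; have := h j.
    by rewrite dotvDr -(hx0 j) -dW lerBrDl.
  by rewrite dotvDr -(hx0 j) -dW lerBrDl.
split.
  move=> i j; rewrite dW rowC dotvBr -(hx0 j) hS; lra.
split.
  rewrite lt0n mxrank_eq0; apply/negP => /eqP U0.
  have all0 : forall x, P1 x -> x = x0.
    move=> x /hc [lam [l0 [l1 ->]]].
    have rv : forall i, row i V1 = x0.
      by move=> i; apply/eqP; rewrite -subr_eq0 -rowU U0 row0.
    under eq_bigr do rewrite rv.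
    by rewrite -scaler_suml l1 scale1r.
  by apply: x12; rewrite (all0 _ Px1) (all0 _ Px2).
move=> y; exists (s + s * dotv x0 (y *m K^T)), (- s *: (y *m K^T)) => i.
rewrite /C row_mul rowU dotv_mul dotvBl dotvZl (dotvC _ (row i V1)); lra.
Qed.

Lemma sum_aff {R : realType} {q} (nu b : 'I_q -> R) a :
  \sum_j nu j * (a - b j) = (\sum_j nu j) * a - \sum_j nu j * b j.
Proof. by rewrite big_distrl -sumrB; apply: eq_bigr => j _; rewrite mulrBr. Qed.

Lemma rowZ' {R : realType} {m n} (a : R) (A : 'M[R]_(m, n)) i : row i (a *: A) = a *: row i A.
Proof. by apply/rowP => k; rewrite !mxE. Qed.

Lemma polar_conv {R : realType} {p q n n2} (M : 'M[R]_(p, q)) (C : 'M[R]_(p, n))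
  (Wm : 'M[R]_(q, n)) (sg : R) (P2 : 'rV[R]_n2 -> Prop) (V2 : 'M[R]_(q, n2))
  (W2 : 'M[R]_(p, n2)) w2 y' :
  0 < sg ->
  (forall z k, (forall i, dotv (row i C) z = k) -> k = 0 /\ z = 0) ->
  (forall i j, M i j = sg - dotv (row j Wm) (row i C)) ->
  (forall y, exists mu : 'I_q -> R, forall i, sg - sg * dotv (row i C) y = \sum_j M i j * mu j) ->
  dim_ge1 P2 -> is_conv_rows P2 V2 -> is_ineq_desc P2 W2 w2 ->
  (forall j i, M^T j i = w2 i - dotv (row i W2) (row j V2)) ->
  (forall i, dotv (row i C) y' <= 1) ->
  in_conv_rows (sg^-1 *: Wm) y'.
Proof.
move=> sg0 zl hS hsp [b [_ [Pb _]]] hc2 hi2 hS2 hy.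
have [mu hmu] := hsp y'.
pose m := \sum_j mu j.
pose d := \sum_j mu j *: row j V2.
have hgd : forall i, sg - sg * dotv (row i C) y' = m * w2 i - dotv (row i W2) d.
  move=> i; rewrite hmu /d dotvC dotv_conv -sum_aff; apply: eq_bigr => j _.
  by have := hS2 j i; rewrite mxE => ->; rewrite mulrC dotvC.
have g0 : forall i, 0 <= sg - sg * dotv (row i C) y'.
  by move=> i; rewrite subr_ge0 -[X in _ <= X]mulr1 ler_wpM2l // ltW.
have [mle|mgt] := lerP m 0.
  exfalso.
  have hb := (hi2 b).1 Pb.
  have e0 : d - m *: b = 0.
    apply: (ray_zero hc2 hi2 Pb) => i; rewrite dotvBr dotvZr.
    have := g0 i; rewrite hgd => h1.
    have h2 : m * w2 i <= m * dotv (row i W2) b by apply: ler_wnM2l.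
    lra.
  have db : d = m *: b by apply: subr0_eq.
  have hone : forall i, dotv (row i C) y' = 1.
    move=> i; have := g0 i; rewrite {1}hgd db dotvZr => h1.
    have h2 : m * (w2 i - dotv (row i W2) b) <= 0.
      by apply: mulr_le0_ge0 => //; rewrite subr_ge0 hb.
    have : sg * (dotv (row i C) y' - 1) = 0.
      by have := hgd i; rewrite db dotvZr => h3; lra.
    move/eqP; rewrite mulf_eq0 (gt_eqF sg0) /= subr_eq0 => /eqP //.
  have [h10 _] := zl y' 1 hone.
  by move: h10; apply/eqP; rewrite oner_eq0.
pose y := m^-1 *: d.
have dy : d = m *: y by rewrite /y scalerA mulfV ?gt_eqF // scale1r.
have P2y : P2 y.
  apply/hi2 => i; rewrite /y dotvZr ler_pdivrMl //.
  by have := g0 i; rewrite hgd subr_ge0.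
have [nu [nu0 [nu1 hyn]]] := (hc2 y).1 P2y.
pose Y := \sum_j nu j *: row j Wm.
have key : forall i, dotv (row i C) (sg *: y' - m *: Y) = sg - m * sg.
  move=> i.
  have h1 : w2 i - dotv (row i W2) y = sg - dotv (row i C) Y.
    rewrite {1}hyn dotvC dotv_conv.
    have -> : w2 i = (\sum_j nu j) * w2 i by rewrite nu1 mul1r.
    rewrite -sum_aff /Y dotv_sumr.
    have -> : sg = (\sum_j nu j) * sg by rewrite nu1 mul1r.
    rewrite big_distrl -sumrB; apply: eq_bigr => j _.
    have := hS2 j i; rewrite mxE hS => h4.
    rewrite dotvZr (dotvC _ (row i W2)) -mulrBr.
    by rewrite (dotvC (row i C)); congr (_ * _); lra.
  have := hgd i; rewrite dy dotvZr => h2.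
  rewrite dotvBr !dotvZr.
  have h3 : m * w2 i - m * dotv (row i W2) y = m * (sg - dotv (row i C) Y).
    by rewrite -h1 mulrBr.
  lra.
have [k0 z0] := zl _ _ key.
have m1 : m = 1.
  have : sg * (1 - m) = 0 by rewrite mulrBr mulr1 (mulrC sg); exact: k0.
  by move/eqP; rewrite mulf_eq0 (gt_eqF sg0) /= subr_eq0 => /eqP <-.
have yY : y' = sg^-1 *: Y.
  have : sg *: y' = Y by apply: subr0_eq; rewrite -z0 m1 scale1r.
  by move<-; rewrite scalerA mulVf ?gt_eqF // scale1r.
exists nu; do 2!split => //.
rewrite yY /Y scaler_sumr; apply: eq_bigr => j _.
by rewrite rowZ' !scalerA mulrC.
Qed.

Lemma dotv0r {R : realType} {n} (z : 'rV[R]_n) : dotv z 0 = 0.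
Proof. by rewrite dotvC dotv0l. Qed.

Theorem proposition2p18 (R : realType) (p q : nat) (M : 'M[R]_(p, q)) :
  (forall i j, 0 <= M i j) ->
  is_slack_matrix M -> is_slack_matrix M^T ->
  exists (n : nat) (P : 'rV[R]_n -> Prop),
    is_polytope P /\ zero_in_interior P /\
    is_slack_matrix_of P M /\ is_slack_matrix_of (polar P) M^T.
Proof.
move=> _ [n1 [P1 [_ [d1 [V1 [W1 [w1 [hc1 [hi1 hS1]]]]]]]]]
  [n2 [P2 [_ [d2 [V2 [W2 [w2 [hc2 [hi2 hS2]]]]]]]]].
have [lam hlam] := span_slack _ _ _ _ _ d2 hc2 hi2 hS2 1 0.
have hl : forall j, \sum_i lam i * M i j = 1.
  move=> j; have := hlam j; rewrite dotv0l addr0 => ->.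
  by apply: eq_bigr => i _; rewrite mxE mulrC.
have [j0 _] : exists j0 : 'I_q, True.
  case: (pickP (fun _ : 'I_q => true)) => [j0 _|h0]; first by exists j0.
  exfalso; have [x [_ [Px _]]] := d2.
  have [nu [_ [nu1 _]]] := (hc2 x).1 Px.
  by move: nu1; rewrite big1 => [/eqP|i _]; [rewrite eq_sym oner_eq0 | have := h0 i].
pose s := \sum_i lam i.
pose a := \sum_i lam i *: row i V1.
have ha : forall j, s * w1 j - dotv (row j W1) a = 1.
  move=> j; rewrite -(hl j) /a dotvC dotv_conv -sum_aff; apply: eq_bigr => i _.
  by rewrite hS1 dotvC.
have [b [_ [Pb _]]] := d1.
have spos : 0 < s.
  rewrite ltNge; apply/negP => sle.
  pose e := a - s *: b.
  have he : forall j, dotv (row j W1) e <= -1.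
    move=> j; rewrite dotvBr dotvZr.
    have h2 : s * w1 j <= s * dotv (row j W1) b by apply: ler_wnM2l => //; exact: (hi1 b).1 Pb j.
    have := ha j; lra.
  have e0 : e = 0 by apply: (ray_zero hc1 hi1 Pb) => j; apply: le_trans (he j) _; rewrite lerN10.
  by have := he j0; rewrite e0 dotv0r; lra.
pose sg := s^-1.
have sg0 : 0 < sg by rewrite invr_gt0.
pose x0 := sg *: a.
have hx0 : forall j, w1 j - dotv (row j W1) x0 = sg.
  move=> j; rewrite dotvZr.
  have -> : dotv (row j W1) a = s * w1 j - 1 by have := ha j; lra.
  rewrite mulrBr mulrA mulVf ?gt_eqF // mul1r mulr1 /sg; lra.
have [n [C [Wm [hineq [hslack [npos hg]]]]]] := coords _ _ _ _ M _ _ d1 hc1 hi1 hS1 hx0.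
pose P := in_conv_rows C.
pose T := \sum_j \sum_k `|Wm j k|.
have T0 : 0 <= T by apply: sumr_ge0 => j _; apply: sumr_ge0.
pose eps := sg / (1 + T).
have eps0 : 0 < eps by rewrite divr_gt0 // ltr_wpDr.
have box : forall c : 'rV[R]_n, (forall k, `|c 0 k| < eps) -> P c.
  move=> c hck; apply/hineq => j.
  rewrite /dotv; apply: le_trans (ler_norm _) _.
  apply: le_trans (ler_norm_sum _ _ _) _.
  apply: (@le_trans _ _ (\sum_k `|Wm j k| * eps)).
    apply: ler_sum => k _; rewrite !mxE normrM; apply: ler_wpM2l => //; exact: ltW.
  rewrite -big_distrl /= /eps.
  have hX : \sum_k `|Wm j k| <= 1 + T.
    apply: (@le_trans _ _ T); last by rewrite lerDr.
    by rewrite /T (bigD1 j) //= lerDl; apply: sumr_ge0 => l _; apply: sumr_ge0.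
  apply: le_trans (ler_wpM2r _ hX) _; first exact: ltW.
  by rewrite mulrC divfK // gt_eqF // ltr_wpDr.
pose k0 : 'I_n := Ordinal npos.
pose ev (k : 'I_n) (dl : R) : 'rV[R]_n := \row_l (if l == k then dl else 0).
have eps2 : 0 < eps / 2 by rewrite divr_gt0.
have Pe : forall k, P (ev k (eps / 2)).
  move=> k; apply: box => l; rewrite !mxE; case: (l == k).
    by rewrite gtr0_norm // ltr_pdivrMr // ltr_pMr // ltr1n.
  by rewrite normr0.
have P0 : P 0 by apply: box => k; rewrite mxE normr0.
have zl : forall z k, (forall i, dotv (row i C) z = k) -> k = 0 /\ z = 0.
  move=> z k hz.
  have k0' : k = 0 by rewrite -(conv_dot_eq _ _ _ _ P0 hz) dotv0l.
  split => //; apply/rowP => l; rewrite mxE.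
  have := conv_dot_eq _ _ _ _ (Pe l) hz; rewrite dotv_e k0' => /eqP.
  by rewrite mulf_eq0 (gt_eqF eps2) /= => /eqP.
have hQ : forall y, polar P y <-> forall i, dotv (row i C) y <= 1.
  move=> y; split.
    by move=> h i; apply: h; exact: conv_row.
  by move=> h x Px; apply: (conv_dot_le _ _ _ _ Px h).
have ev0 : forall k dl, dl != 0 -> ev k dl != 0.
  move=> k dl hdl; apply/eqP => /rowP /(_ k); rewrite !mxE eqxx => h.
  by move: hdl; rewrite h eqxx.
exists n, P.
have polP : is_polytope P by exists p, C.
split => //.
split; first by exists eps; split.
split.
  split => //; split.
    exists 0, (ev k0 (eps / 2)); do 2!split => //.
    by move=> h; move: (ev0 k0 (eps / 2) (lt0r_neq0 eps2)); rewrite -h eqxx.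
  exists C, Wm, (fun _ => sg); split => //; split => //.
pose V' := sg^-1 *: Wm.
have hQc : is_conv_rows (polar P) V'.
  move=> y; split.
    move=> /hQ hy.
    have hsp : forall y0 : 'rV[R]_n, exists mu : 'I_q -> R,
        forall i, sg - sg * dotv (row i C) y0 = \sum_j M i j * mu j.
      move=> y0; have [h0 [h hh]] := hg y0.
      have [mu hmu] := span_slack _ _ _ _ _ d1 hc1 hi1 hS1 h0 h.
      by exists mu => i; rewrite hh hmu.
    exact: (polar_conv _ _ _ _ _ _ _ _ _ sg0 zl hslack hsp d2 hc2 hi2 hS2 hy).
  move=> [nu [nu0 [nu1 ->]]] x Px.
  rewrite dotvC; apply: conv_dot_le; first by exists nu.
  move=> j; rewrite rowZ' dotvZl dotvC ler_pdivrMl // mulr1.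
  by rewrite dotvC; exact: (hineq x).1 Px j.
split; first by exists q, V'.
split.
  pose dl := 1 / (1 + \sum_i `|C i k0|).
  have dl0 : 0 < dl by rewrite divr_gt0 // ltr_wpDr // sumr_ge0.
  exists 0, (ev k0 dl); split.
    by move=> x _; rewrite dotv0r ler01.
  split.
    apply/hQ => i; rewrite dotvC dotv_e.
    apply: le_trans (ler_wpM2l (ltW dl0) (ler_norm _)) _.
    apply: (@le_trans _ _ (dl * (1 + \sum_i `|C i k0|))).
      apply: ler_wpM2l; first exact: ltW.
      apply: (@le_trans _ _ (\sum_i `|C i k0|)); last by rewrite lerDr.
      by rewrite (bigD1 i) //= mxE lerDl sumr_ge0.
    by rewrite /dl divfK ?gt_eqF // ltr_wpDr // sumr_ge0.
  by move=> h; move: (ev0 k0 dl (lt0r_neq0 dl0)); rewrite -h eqxx.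
exists V', (sg *: C), (fun _ => sg); split => //; split.
  move=> y; rewrite hQ; split => h i; have := h i; rewrite rowZ' dotvZl.
    by rewrite -{2}[sg]mulr1 ler_pM2l.
  by rewrite -{2}[sg]mulr1 ler_pM2l.
move=> j i; rewrite mxE hslack /V' !rowZ' dotvZl dotvZr. rewrite mulrA mulfV ?gt_eqF // mul1r.
by rewrite dotvC.
Qed.
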